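(* For every integer $k\geq 3$ there exists a tree $T$ of order $n$ such that $\mathrm{rad}(T)>k$ and $\gamma_{B_k}(T)=\left\lceil\frac{k+2}{k+1}\cdot\frac{n}{3}\right\rceil$.
   Context: $d(u,v)$ denotes the distance in the graph; $\mathrm{rad}(T)$ is the radius. For a connected graph $G$ and an integer $k\ge 1$, a function $f\colon V(G)\to\{0,1,\dots,k\}$ is a dominating $k$-broadcast on $G$ if for every $u\in V(G)$ there is a vertex $v$ with $f(v)\geq 1$ and $d(u,v)\leq f(v)$. Its cost is $\omega(f)=\sum_{u\in V(G)}f(u)$, and the dominating $k$-broadcast number $\gamma_{B_k}(G)$ is the minimum cost of a dominating $k$-broadcast on $G$. *)

(* Defs.v *)
From mathcomp Require Import all_boot all_order.
Set Implicit Arguments. Unset Strict Implicit. Unset Printing Implicit Defensive.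

Section Graphs.
Variable T : finType.
Variable e : rel T.

Definition simple_graph : Prop := symmetric e /\ irreflexive e.

Definition edges : {set {set T}} := [set [set x; y] | x in T, y in T & e x y].

Definition connected_graph : Prop := forall u v : T, connect e u v.

Definition is_tree : Prop :=
  [/\ simple_graph, 0 < #|T|, connected_graph & #|edges| = #|T| - 1].

Fixpoint ball (m : nat) (u : T) : {set T} :=
  match m with
  | 0 => [set u]
  | m'.+1 => ball m' u :|: [set y | [exists x in ball m' u, e x y]]
  end.

(* graph distance: least m with v in ball m u (= #|T| if unreachable) *)
Definition dist (u v : T) : nat := find (fun m => v \in ball m u) (iota 0 #|T|).

Definition ecc (u : T) : nat := \max_(v : T) dist u v.

Definition rad : nat := \big[minn/#|T|]_(u : T) ecc u.

Definition dominating_broadcast (k : nat) (f : {ffun T -> 'I_k.+1}) : bool :=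
  [forall u : T, exists v : T, (1 <= f v) && (dist u v <= f v)].

Definition bcost (k : nat) (f : {ffun T -> 'I_k.+1}) : nat := \sum_(v : T) (f v : nat).

(* dominating k-broadcast number (minimum cost); default #|T| is never
   smaller than the minimum for connected graphs (all-ones broadcast) *)
Definition gammaB (k : nat) : nat :=
  \big[minn/#|T|]_(f : {ffun T -> 'I_k.+1} | dominating_broadcast f) bcost f.

End Graphs.

Definition ceil_div (a b : nat) : nat := (a + b - 1) %/ b.

(* Main.v *)
Require Import Defs.
From mathcomp Require Import all_boot all_order zify.
Set Implicit Arguments. Unset Strict Implicit. Unset Printing Implicit Defensive.

Section Tree.
Variable k : nat.
Hypothesis k3 : 3 <= k.

Definition pos (v : nat) : nat := if v < 2*k+3 then v else 2*(v - (2*k+2)).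
Definition hh (v : nat) : nat := if v < 2*k+3 then 0 else 1.
Definition adj (u v : nat) : bool :=
  [|| (u < 2*k+3) && (v < 2*k+3) && ((u.+1 == v) || (v.+1 == u)),
      (2*k+3 <= u) && (v == pos u) | (2*k+3 <= v) && (u == pos v)].
Definition D (u v : nat) : nat :=
  if u == v then 0 else (pos u - pos v) + (pos v - pos u) + hh u + hh v.

Ltac crunch :=
  rewrite /D /adj /pos /hh;
  repeat (match goal with
  | |- context[if ?a < ?b then _ else _] => case: (ltnP a b)
  | |- context[?a == ?b] => case: eqP
  end); move=> *; lia.

Lemma adj_sym u v : adj u v = adj v u.
Proof. rewrite /adj /pos; case: (ltnP u); case: (ltnP v) => *; apply/idP/idP. all: lia. Qed.

Lemma adj_irr u : u < 3*k+3 -> adj u u = false.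
Proof. move=> ?; rewrite /adj /pos; case: (ltnP u) => *; apply/negbTE/negP; lia. Qed.
Lemma D_sym u v : D u v = D v u.
Proof. crunch. Qed.

Lemma D_pos u v : u < 3*k+3 -> v < 3*k+3 -> u <> v -> 0 < D u v.
Proof. crunch. Qed.

Lemma D_le u v : u < 3*k+3 -> v < 3*k+3 -> D u v <= 2*k+4.
Proof. crunch. Qed.

Lemma D_step u x v : u < 3*k+3 -> x < 3*k+3 -> v < 3*k+3 -> adj x v -> D u v <= (D u x).+1.
Proof. crunch. Qed.
Lemma D_back u v : u < 3*k+3 -> v < 3*k+3 -> 0 < D u v ->
  exists x, [/\ x < 3*k+3, adj x v & D u x = (D u v).-1].
Proof.
move=> Hu Hv Hd; case: (ltnP v (2*k+3)) => Hs.
  case: (ltngtP (pos u) v) => H.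
  - exists v.-1; split; move: Hd H; [crunch|crunch|crunch].
  - exists v.+1; split; move: Hd H; [crunch|crunch|crunch].
  - exists u; split; move: Hd H; [crunch|crunch|crunch].
exists (pos v); split; move: Hd; [crunch|crunch|crunch].
Qed.
End Tree.

Section T2.
Variable k : nat.
Hypothesis k3 : 3 <= k.
Local Notation D := (D k).
Local Notation adj := (adj k).
Local Notation pos := (pos k).
Local Notation hh := (hh k).
Ltac crunch :=
  rewrite /D /adj /pos /hh;
  repeat (match goal with
  | |- context[if ?a < ?b then _ else _] => case: (ltnP a b)
  | |- context[?a == ?b] => case: eqP
  end); move=> *; lia.
Local Notation n := (3*k+2).+1.
Lemma ordn (u : 'I_n) : u < 3*k+3.
Proof. have := ltn_ord u; lia. Qed.

Definition e : rel 'I_n := fun x y => adj x y.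

Lemma ball_D m (u v : 'I_n) : (v \in ball e m u) = (D u v <= m).
Proof.
elim: m v => [|m IH] v /=.
  rewrite in_set1; case: (eqVneq v u) => [->|H]; first by rewrite /D eqxx.
  have Hp : 0 < D u v.
    apply: (D_pos k3 (ordn u) (ordn v)) => E; move: H.
    by rewrite (val_inj E) eqxx.
  by apply: esym; apply/negbTE; rewrite -ltnNge.
rewrite in_setU in_set IH; apply/idP/idP.
  case/orP => [H|]; first by apply: leqW.
  case/existsP => x /andP[]; rewrite IH => Hx Hxv.
  apply: leq_trans (D_step k3 (ordn u) (ordn x) (ordn v) Hxv) _; by [].
move=> H; case: (leqP (D u v) m) => [//|Hlt]; apply/orP; right.
have Hp : 0 < D u v by lia.
have [x [Hx Hxv Hd]] := D_back k3 (ordn u) (ordn v) Hp.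
have Hx2 : x < n by lia.
apply/existsP; exists (Ordinal Hx2); rewrite IH /e /= Hd Hxv andbT; lia.
Qed.

Lemma find_iota d a m : a <= d < a + m -> find (fun i => d <= i) (iota a m) = d - a.
Proof.
elim: m a => [|m IH] a; first by lia.
move=> H /=; case: (leqP d a) => Ha; first by lia.
rewrite IH; lia.
Qed.

Lemma dist_D (u v : 'I_n) : dist e u v = D u v.
Proof.
rewrite /dist card_ord (eq_find (a2 := fun i => D u v <= i)); last by move=> i; rewrite ball_D.
rewrite find_iota ?subn0 //; have := D_le k3 (ordn u) (ordn v); lia.
Qed.
End T2.
Section T3.
Variable k : nat.
Hypothesis k3 : 3 <= k.
Local Notation D := (D k).
Local Notation adj := (adj k).
Local Notation pos := (pos k).
Local Notation hh := (hh k).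
Local Notation n := (3*k+2).+1.
Local Notation e := (@e k).
Ltac crunch :=
  rewrite /D /adj /pos /hh;
  repeat (match goal with
  | |- context[if ?a < ?b then _ else _] => case: (ltnP a b)
  | |- context[?a == ?b] => case: eqP
  end); move=> *; lia.

Lemma ball_connect m (u v : 'I_n) : v \in ball e m u -> connect e u v.
Proof.
elim: m v => [|m IH] v /=; first by rewrite in_set1 => /eqP ->.
rewrite in_setU => /orP[/IH //|]; rewrite inE => /existsP[x /andP[Hx Hxv]].
by apply: connect_trans (IH _ Hx) (connect1 Hxv).
Qed.

Definition par (v : 'I_n) : 'I_n := inord (if v < 2*k+3 then v.-1 else pos v).

Lemma par_val (v : 'I_n) : (par v : nat) = if v < 2*k+3 then v.-1 else pos v.
Proof. rewrite /par inordK //; have := ordn k3 v; crunch. Qed.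

Lemma par_adj (v : 'I_n) : (v : nat) != 0 -> e v (par v).
Proof. rewrite /e par_val; have := ordn k3 v; move=> H1 /eqP H2; move: H1 H2; crunch. Qed.

Lemma par_lt (v : 'I_n) : (v : nat) != 0 -> (par v : nat) < v.
Proof. rewrite par_val; have := ordn k3 v; move=> H1 /eqP H2; move: H1 H2; crunch. Qed.

Lemma adj_par (x y : 'I_n) : e x y -> (x == par y) || (y == par x).
Proof.
rewrite /e; have := ordn k3 x; have := ordn k3 y => H1 H2 H3.
have /orP[/eqP E|/eqP E] : ((x : nat) == par y) || ((y : nat) == par x).
  rewrite !par_val; move: H1 H2 H3; rewrite /adj /pos;
  repeat (match goal with
  | |- context[if ?a < ?b then _ else _] => case: (ltnP a b)
  end); move=> *; lia.
- by rewrite (val_inj E) eqxx.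
- by rewrite (val_inj E) eqxx orbT.
Qed.
End T3.
Section T4.
Variable k : nat.
Hypothesis k3 : 3 <= k.
Local Notation D := (D k).
Local Notation adj := (adj k).
Local Notation pos := (pos k).
Local Notation hh := (hh k).
Local Notation n := (3*k+2).+1.
Local Notation e := (@e k).
Ltac crunch :=
  rewrite /D /adj /pos /hh;
  repeat (match goal with
  | |- context[if ?a < ?b then _ else _] => case: (ltnP a b)
  | |- context[?a == ?b] => case: eqP
  end); move=> *; lia.

Lemma edges_eq : edges e = [set [set v; par v] | v in [set~ (ord0 : 'I_n)]].
Proof.
apply/eqP; rewrite eqEsubset; apply/andP; split; apply/subsetP => S.
  case/imset2P => x y _; rewrite inE => /andP[_ Hxy] ->.
  case/orP: (adj_par k3 Hxy) => /eqP E.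
    have Hy : (y : nat) != 0.
      apply/eqP => Hy0; move: Hxy; rewrite E /e (par_val k3) Hy0 /=.
      crunch.
    rewrite E setUC; apply: imset_f; rewrite !inE; apply/eqP => Ey.
    by move: Hy; rewrite Ey.
  have Hx : (x : nat) != 0.
    apply/eqP => Hx0; move: Hxy; rewrite E /e (par_val k3) Hx0 /=.
    crunch.
  rewrite E; apply: imset_f; rewrite !inE; apply/eqP => Ex.
  by move: Hx; rewrite Ex.
case/imsetP => v; rewrite !inE => Hv ->.
have Hv' : (v : nat) != 0 by apply: contraNneq Hv => H; apply/eqP/val_inj.
apply: imset2_f; first by [].
by rewrite !inE /= (par_adj k3 Hv').
Qed.

Lemma edges_card : #|edges e| = #|'I_n| - 1.
Proof.
rewrite edges_eq card_in_imset ?cardsC1 ?subn1 //.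
move=> v w; rewrite !inE => Hv Hw E.
have Hv' : (v : nat) != 0 by apply: contraNneq Hv => H; apply/eqP/val_inj.
have Hw' : (w : nat) != 0 by apply: contraNneq Hw => H; apply/eqP/val_inj.
have := par_lt k3 Hv'; have := par_lt k3 Hw'.
have : v \in [set w; par w] by rewrite -E !inE eqxx.
have : w \in [set v; par v] by rewrite E !inE eqxx.
rewrite !inE => /orP[/eqP -> //|/eqP Ew] /orP[/eqP -> //|/eqP Ev].
rewrite -Ev -Ew => h1 h2; exfalso; lia.
Qed.

Lemma tree_e : is_tree e.
Proof.
split.
- split; first by move=> x y; rewrite /e adj_sym.
  by move=> x; rewrite /e adj_irr // (ordn k3).
- by rewrite card_ord.
- move=> u v; apply: (@ball_connect k (D u v)); by rewrite (ball_D k3).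
- exact: edges_card.
Qed.
End T4.
Section T5.
Variable k : nat.
Hypothesis k3 : 3 <= k.
Local Notation D := (D k).
Local Notation adj := (adj k).
Local Notation pos := (pos k).
Local Notation hh := (hh k).
Local Notation n := (3*k+2).+1.
Local Notation e := (@e k).
Ltac crunch :=
  rewrite /D /adj /pos /hh;
  repeat (match goal with
  | |- context[if ?a < ?b then _ else _] => case: (ltnP a b)
  | |- context[?a == ?b] => case: eqP
  end); move=> *; lia.

Lemma ecc_gt (u : 'I_n) : k < ecc e u.
Proof.
rewrite /ecc; have Hu := ordn k3 u; case: (leqP (pos u) (k+1)) => H.
  apply: (leq_trans _ (leq_bigmax (inord (2*k+2) : 'I_n))).
  rewrite (dist_D k3) inordK; last by lia.
  move: Hu H; crunch.
apply: (leq_trans _ (leq_bigmax (ord0 : 'I_n))).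
rewrite (dist_D k3) /=; move: Hu H; crunch.
Qed.

Lemma rad_gt : k < rad e.
Proof.
rewrite /rad; apply: (big_ind (fun x => k < x)).
- rewrite card_ord; lia.
- by move=> x y hx hy; rewrite leq_min hx hy.
- by move=> u _; apply: ecc_gt.
Qed.
End T5.

Section T6.
Variable k : nat.
Hypothesis k3 : 3 <= k.
Local Notation D := (D k).
Local Notation adj := (adj k).
Local Notation pos := (pos k).
Local Notation hh := (hh k).
Local Notation n := (3*k+2).+1.
Local Notation e := (@e k).
Ltac crunch :=
  rewrite /D /adj /pos /hh;
  repeat (match goal with
  | |- context[if ?a < ?b then _ else _] => case: (ltnP a b)
  | |- context[?a == ?b] => case: eqP
  end); move=> *; lia.

Definition gval (j : nat) : nat := if j == 0 then 0 else if j == k+1 then 2*k+2 else 2*k+2+j.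

Lemma gval_pos j : j < k+2 -> pos (gval j) = 2*j.
Proof. rewrite /gval /pos; repeat (match goal with
  | |- context[?a == ?b] => case: eqP
  end); repeat (match goal with
  | |- context[if ?a < ?b then _ else _] => case: (ltnP a b)
  end); move=> * /=; lia. Qed.

Lemma gval_hh j : j < k+2 -> hh (gval j) = if (j == 0) || (j == k+1) then 0 else 1.
Proof. rewrite /gval /hh; repeat (match goal with
  | |- context[?a == ?b] => case: eqP
  end); repeat (match goal with
  | |- context[if ?a < ?b then _ else _] => case: (ltnP a b)
  end); move=> * /=; lia. Qed.

Lemma gval_lt j : j < k+2 -> gval j < 3*k+3.
Proof. rewrite /gval; repeat (match goal with
  | |- context[?a == ?b] => case: eqP
  end); move=> * /=; lia. Qed.

Lemma gval_inj i j : i < k+2 -> j < k+2 -> gval i = gval j -> i = j.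
Proof. rewrite /gval; repeat (match goal with
  | |- context[?a == ?b] => case: eqP
  end); move=> * /=; lia. Qed.

Lemma pair_bound i j v s : i < k+2 -> j < k+2 -> v < 3*k+3 -> 1 <= s <= k ->
  D (gval i) v <= s -> D (gval j) v <= s -> i <= j + s.-1.
Proof.
move=> Hi Hj Hv Hs Ha Hb; case: (leqP i j) => Hij; first lia.
have Hab : gval i != gval j by apply/eqP => /(gval_inj Hi Hj); lia.
have Hhi : hh (gval i) <= 1 by rewrite (gval_hh Hi); case: ifP.
have Hhj : hh (gval j) <= 1 by rewrite (gval_hh Hj); case: ifP.
have Hhv : hh v <= 1 by rewrite /hh; case: ifP.
have Hz : hh (gval i) + hh (gval j) = 0 -> i = k+1 /\ j = 0.
  rewrite (gval_hh Hi) (gval_hh Hj).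
  repeat (match goal with | |- context[?a == ?b] => case: eqP end); rewrite /= => *; lia.
move: Ha Hb; rewrite /D.
case: (eqVneq (gval i) v) => [Eiv|Niv]; case: (eqVneq (gval j) v) => [Ejv|Njv].
- by move: Hab; rewrite Eiv Ejv eqxx.
- rewrite -Eiv (gval_pos Hi) (gval_pos Hj); move: Hz; lia.
- rewrite -Ejv (gval_pos Hi) (gval_pos Hj); move: Hz; lia.
- rewrite (gval_pos Hi) (gval_pos Hj); move: Hz; lia.
Qed.
End T6.

Lemma card_window M s (S : {set 'I_M}) :
  0 < s -> (forall i j, i \in S -> j \in S -> i <= j + s.-1) -> #|S| <= s.
Proof.
move=> Hs H; case: (set_0Vmem S) => [->|[i0 Hi0]]; first by rewrite cards0.
case: (arg_minnP (fun i : 'I_M => (i : nat)) Hi0) => m Hm Hmin.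
pose F (i : 'I_M) : 'I_(s.-1).+1 := inord (i - m).
have -> : #|S| = #|F @: S|.
  rewrite card_in_imset // => x y Hx Hy E.
  have h1 := H x m Hx Hm; have h2 := H y m Hy Hm; have h3 := Hmin x Hx; have h4 := Hmin y Hy.
  have := congr1 (@nat_of_ord _) E; rewrite /F !inordK; try lia.
  move=> *; apply: val_inj => /=; lia.
apply: (leq_trans (max_card _)); rewrite card_ord; lia.
Qed.

Section T7.
Variable k : nat.
Hypothesis k3 : 3 <= k.
Local Notation D := (D k).
Local Notation n := (3*k+2).+1.
Local Notation e := (@e k).
Local Notation gval := (gval k).

Lemma sum1_ord m : \sum_(j < m) 1 = m.
Proof. by rewrite big_const_ord iter_addn_0 mul1n. Qed.

Lemma cost_lb (f : {ffun 'I_n -> 'I_k.+1}) : dominating_broadcast e f -> k+2 <= bcost f.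
Proof.
move=> /forallP Hdom.
pose gl (j : 'I_(k+2)) : 'I_n := inord (gval j).
have glv : forall j : 'I_(k+2), (gl j : nat) = gval j.
  by move=> j; rewrite /gl inordK //; have := gval_lt k3 (ltn_ord j); lia.
pose Sv (v : 'I_n) := [set j : 'I_(k+2) | (1 <= f v) && (dist e (gl j) v <= f v)].
have HS : forall v, #|Sv v| <= f v.
  move=> v; case: (posnP (f v)) => Hf.
    rewrite Hf leqn0 cards_eq0; apply/eqP/setP => j; rewrite !inE Hf; by [].
  apply: card_window => // i j; rewrite !inE => /andP[_ Hi] /andP[_ Hj].
  have := ltn_ord (f v) => Hfk.
  apply: (pair_bound k3 (ltn_ord i) (ltn_ord j) (ordn k3 v)); first lia.
    by rewrite -(glv i) -(dist_D k3).
  by rewrite -(glv j) -(dist_D k3).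
have H1 : k+2 <= \sum_(j : 'I_(k+2)) \sum_(v : 'I_n) ((j \in Sv v) : nat).
  rewrite -{1}[k+2]sum1_ord; apply: leq_sum => j _.
  have [v /andP[H1 H2]] := existsP (Hdom (gl j)).
  rewrite (bigD1 v) //=; have -> : j \in Sv v by rewrite inE H1 H2.
  by [].
apply: (leq_trans H1); rewrite exchange_big /=; rewrite /bcost; apply: leq_sum => v _.
apply: leq_trans (HS v); rewrite -sum1_card [X in _ <= X]big_mkcond /=; apply: leq_sum => j _.
by case: (j \in Sv v).
Qed.
End T7.

Lemma bigmin_le (I : finType) (P : pred I) (F : I -> nat) x j :
  P j -> \big[minn/x]_(i | P i) F i <= F j.
Proof.
move=> Pj; have := mem_index_enum j; elim: (index_enum I) => // a r IH.
rewrite inE big_cons => /orP[/eqP <-|Hj].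
  by rewrite Pj geq_minl.
case: ifP => _; last exact: IH.
by apply: leq_trans (geq_minr _ _) (IH Hj).
Qed.

Section T8.
Variable k : nat.
Hypothesis k3 : 3 <= k.
Local Notation D := (D k).
Local Notation n := (3*k+2).+1.
Local Notation e := (@e k).

Definition fval (v : nat) : nat := if v == k+1 then k else if (v == 0) || (v == 2*k+2) then 1 else 0.
Definition fB : {ffun 'I_n -> 'I_k.+1} := [ffun v : 'I_n => inord (fval v)].

Lemma fB_val v : (fB v : nat) = fval v.
Proof.
rewrite ffunE inordK // /fval.
repeat (match goal with | |- context[?a == ?b] => case: eqP end); rewrite /= => *; lia.
Qed.

Lemma fB_dom : dominating_broadcast e fB.
Proof.
apply/forallP => u; apply/existsP.
have Hu := ordn k3 u.
case: (leqP (D u (k+1)) k) => H.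
  have Hc : k+1 < n by lia.
  exists (Ordinal Hc); rewrite fB_val (dist_D k3) /= /fval eqxx; apply/andP; split; lia.
exists u; rewrite fB_val (dist_D k3) /D eqxx /= andbT.
move: H Hu; rewrite /D /fval /pos /hh;
repeat (match goal with | |- context[?a == ?b] => case: eqP end); 
repeat (match goal with | |- context[if ?a < ?b then _ else _] => case: (ltnP a b) end);
rewrite /= => *; lia.
Qed.

Lemma sum_pt c a : c < n -> \sum_(v : 'I_n) (if (v : nat) == c then a else 0) = a.
Proof.
move=> Hc; rewrite (bigD1 (Ordinal Hc)) //= eqxx big1 ?addn0 // => v Hv.
case: eqP => // E; exfalso; move: Hv; suff -> : v = Ordinal Hc by rewrite eqxx.
by apply: val_inj.
Qed.

Lemma fB_cost : bcost fB = k+2.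
Proof.
rewrite /bcost; under eq_bigr do rewrite fB_val.
under eq_bigr => v _ do have -> : fval v = (if (v : nat) == k+1 then k else 0) +
   (if (v : nat) == 0 then 1 else 0) + (if (v : nat) == 2*k+2 then 1 else 0)
  by rewrite /fval; repeat (match goal with | |- context[?a == ?b] => case: eqP end); rewrite /= => *; lia.
rewrite !big_split /= !sum_pt; lia.
Qed.

Lemma gammaB_eq : gammaB e k = k+2.
Proof.
apply/eqP; rewrite eqn_leq; apply/andP; split.
  rewrite -fB_cost; apply: bigmin_le; exact: fB_dom.
rewrite /gammaB; apply: (big_ind (fun x => k+2 <= x)).
- rewrite card_ord; lia.
- by move=> x y hx hy; rewrite leq_min hx hy.
- by move=> f Hf; apply: cost_lb.
Qed.

Lemma ceil_eq : ceil_div ((k + 2) * n) (3 * (k + 1)) = k+2.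
Proof.
rewrite /ceil_div.
have -> : (k + 2) * n + 3 * (k + 1) - 1 = (k+2) * (3 * (k+1)) + (3*k+2) by nia.
rewrite divnMDl ?divn_small; lia.
Qed.
End T8.

Theorem proposition3 :
  forall k : nat, 3 <= k ->
  exists (n : nat) (e : rel 'I_n),
    [/\ is_tree e, k < rad e &
        gammaB e k = ceil_div ((k + 2) * n) (3 * (k + 1))].
Proof.
move=> k k3; exists (3*k+2).+1, (@e k); split.
- exact: tree_e.
- exact: rad_gt.
- by rewrite ceil_eq // gammaB_eq.
Qed.
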